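(* Let $G$ be a discrete (not necessarily countable) amenable ICC group, and let $X$ be a finite symmetric subset of $G$. Then the set of super-switching elements for $X$ is infinite.
   Context: A group has the infinite conjugacy class property (ICC) if it is non-trivial and every non-identity element has an infinite conjugacy class. A subset $X\subseteq G$ is symmetric if $X=X^{-1}$. An element $g\in G$ is a super-switching element for $X$ if $X\cap\big(gXg\cup gXg^{-1}\cup g^{-1}Xg\cup g^{-1}Xg^{-1}\big)\subseteq\{e\}$. *)

(* Defs.v *)
From Stdlib Require Import Reals List.
Open Scope R_scope.

Record is_group {G : Type} (mul : G -> G -> G) (e : G) (inv : G -> G) : Prop := {
  grp_assoc : forall x y z, mul x (mul y z) = mul (mul x y) z;
  grp_id_l  : forall x, mul e x = x;
  grp_id_r  : forall x, mul x e = x;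
  grp_inv_l : forall x, mul (inv x) x = e;
  grp_inv_r : forall x, mul x (inv x) = e
}.

Definition finite_set {G : Type} (A : G -> Prop) : Prop :=
  exists l : list G, forall x, A x -> In x l.

Definition infinite_set {G : Type} (A : G -> Prop) : Prop := ~ finite_set A.

Definition conj_class {G : Type} (mul : G -> G -> G) (inv : G -> G) (g : G)
  : G -> Prop := fun y => exists h, y = mul (mul h g) (inv h).

Definition ICC {G : Type} (mul : G -> G -> G) (e : G) (inv : G -> G) : Prop :=
  (exists g : G, g <> e) /\
  forall g : G, g <> e -> infinite_set (conj_class mul inv g).

Definition amenable {G : Type} (mul : G -> G -> G) (inv : G -> G) : Prop :=
  exists m : (G -> Prop) -> R,
    (forall A, 0 <= m A) /\
    m (fun _ => True) = 1 /\
    (forall A B : G -> Prop, (forall x, A x -> B x -> False) ->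
        m (fun x => A x \/ B x) = m A + m B) /\
    (forall (g : G) (A : G -> Prop), m (fun x => A (mul (inv g) x)) = m A).

Definition symmetric_set {G : Type} (inv : G -> G) (X : G -> Prop) : Prop :=
  forall x, X x <-> X (inv x).

(* g is super-switching for X:
   X ∩ (gXg ∪ gXg⁻¹ ∪ g⁻¹Xg ∪ g⁻¹Xg⁻¹) ⊆ {e}. *)
Definition super_switching {G : Type} (mul : G -> G -> G) (e : G) (inv : G -> G)
  (X : G -> Prop) (g : G) : Prop :=
  forall y : G, X y ->
    (exists x, X x /\
      (y = mul (mul g x) g \/ y = mul (mul g x) (inv g) \/
       y = mul (mul (inv g) x) g \/ y = mul (mul (inv g) x) (inv g))) ->
    y = e.

(* Main.v *)
Require Import Defs.
From Stdlib Require Import Reals List Lra ZArith Classical FunctionalExtensionality PropExtensionality.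
Open Scope R_scope.

Theorem proposition2p4 (G : Type) (mul : G -> G -> G) (e : G) (inv : G -> G)
  (Hgrp : is_group mul e inv)
  (Hamen : amenable mul inv)
  (Hicc : ICC mul e inv)
  (X : G -> Prop) (HXfin : finite_set X) (HXsym : symmetric_set inv X) :
  infinite_set (super_switching mul e inv X).
Proof.
  destruct Hgrp as [assoc idl idr invl invr].
  destruct Hamen as [m [Hnn [H1 [Hadd Hinv]]]].
  assert (cl : forall a x, mul (inv a) (mul a x) = x).
  { intros; rewrite assoc, invl, idl; reflexivity. }
  assert (cl' : forall a x, mul a (mul (inv a) x) = x).
  { intros; rewrite assoc, invr, idl; reflexivity. }
  assert (inv_inv : forall a, inv (inv a) = a).
  { intros a. rewrite <- (idr (inv (inv a))), <- (invl a), assoc, invl, idl. reflexivity. }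
  assert (canl : forall a b c, mul a b = mul a c -> b = c).
  { intros a b c H. rewrite <- (cl a b), <- (cl a c), H. reflexivity. }
  assert (inv_uniq : forall a b, mul a b = e -> b = inv a).
  { intros a b H. apply (canl a). rewrite H, invr. reflexivity. }
  assert (inv_mul : forall a b, inv (mul a b) = mul (inv b) (inv a)).
  { intros a b. symmetry. apply inv_uniq. rewrite <- assoc, cl', invr. reflexivity. }
  assert (inv_e : inv e = e).
  { symmetry; apply inv_uniq; apply idl. }
  set (c := fun a b => mul (mul a b) (inv a)).
  assert (c_e : forall a, c a e = e).
  { intros a; unfold c; rewrite idr, invr; reflexivity. }
  assert (c_inv : forall a w v, c a w = v -> w = c (inv a) v).
  { intros a w v H. unfold c in *. subst v. rewrite inv_inv, <- !assoc, cl, invl, idr. reflexivity. }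
  assert (c_mul : forall a b u, c (mul a b) u = c a (c b u)).
  { intros. unfold c. rewrite inv_mul, <- !assoc. reflexivity. }
  assert (mext : forall A B : G -> Prop, (forall x, A x <-> B x) -> m A = m B).
  { intros A B H. f_equal. apply functional_extensionality; intro x.
    apply propositional_extensionality; apply H. }
  assert (m0 : m (fun _ => False) = 0).
  { pose proof (Hadd (fun _ => False) (fun _ => False) (fun _ f _ => f)) as H.
    rewrite (mext _ (fun _ => False)) in H by tauto. lra. }
  assert (mdiff : forall A B : G -> Prop,
    m (fun x => A x \/ B x) = m A + m B - m (fun x => A x /\ B x)).
  { intros A B.
    assert (E1 := Hadd A (fun x => B x /\ ~ A x)).
    assert (E2 := Hadd (fun x => B x /\ ~ A x) (fun x => A x /\ B x)).
    assert (D1 : forall x, A x -> (B x /\ ~ A x) -> False) by (intros x Ha [Hb Hna]; exact (Hna Ha)).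
    assert (D2 : forall x, (B x /\ ~ A x) -> (A x /\ B x) -> False) by (intros x [Hb Hna] [Ha Hb']; exact (Hna Ha)).
    specialize (E1 D1). specialize (E2 D2).
    rewrite (mext _ (fun x => A x \/ B x)) in E1
      by (intro x; destruct (classic (A x)); tauto).
    rewrite (mext _ B) in E2 by (intro x; destruct (classic (A x)); tauto).
    lra. }
  assert (mmono : forall A B : G -> Prop, (forall x, A x -> B x) -> m A <= m B).
  { intros A B H. assert (E := Hadd A (fun x => B x /\ ~ A x)).
    assert (D1 : forall x, A x -> (B x /\ ~ A x) -> False) by (intros x Ha [Hb Hna]; exact (Hna Ha)).
    specialize (E D1).
    rewrite (mext _ B) in E by (intro x; specialize (H x); destruct (classic (A x)); tauto).
    pose proof (Hnn (fun x => B x /\ ~ A x)). lra. }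
  assert (null_sub : forall A B : G -> Prop, (forall x, A x -> B x) -> m B = 0 -> m A = 0).
  { intros A B H HB. pose proof (mmono A B H). pose proof (Hnn A). lra. }
  assert (null_union : forall A B : G -> Prop, m A = 0 -> m B = 0 -> m (fun x => A x \/ B x) = 0).
  { intros A B HA HB. rewrite mdiff, HA, HB. pose proof (Hnn (fun x => A x /\ B x)).
    pose proof (mmono (fun x => A x /\ B x) A (fun x H => proj1 H)). lra. }
  assert (null_list : forall (T : Type) (l : list T) (P : T -> G -> Prop),
    (forall a, In a l -> m (P a) = 0) -> m (fun g => exists a, In a l /\ P a g) = 0).
  { intros T l P. induction l as [|a l IH]; intros H.
    - rewrite <- m0. apply mext. intro x. split; [intros [? [[] _]] | intros []].
    - rewrite (mext _ (fun g => P a g \/ (exists a, In a l /\ P a g))).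
      + apply null_union. apply H; left; auto. apply IH. intros; apply H; right; auto.
      + intro x; split.
        * intros [b [[<-|Hb] Hp]]; [left; auto | right; eauto].
        * intros [Hp | [b [Hb Hp]]]; [exists a; split; [left|]; auto | exists b; split; [right|]; auto].
  }
  assert (mle1 : forall A, m A <= 1).
  { intro A. rewrite <- H1. apply mmono. auto. }
  assert (transl : forall t A, m (fun g => A (mul t g)) = m A).
  { intros t A. rewrite <- (Hinv (inv t) A). apply mext. intro; rewrite inv_inv; tauto. }
  destruct Hicc as [[g0 Hg0] Hicc].
  assert (conj_inf : forall v, v <> e -> forall l : list G,
    exists h, forall h', In h' l -> c h v <> c h' v).
  { intros v Hv l. apply NNPP. intro Hn.
    apply (Hicc v Hv). exists (map (fun h' => c h' v) l).
    intros y [h Hy]. subst y.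
    destruct (classic (exists h', In h' l /\ c h v = c h' v)) as [[h' [Hi Heq]] | Hno].
    - fold (c h v). rewrite Heq. exact (in_map (fun h1 => c h1 v) l h' Hi).
    - exfalso. apply Hn. exists h. intros h1 Hi Heq. apply Hno. exists h1; split; assumption. }
  assert (Ginf : forall l : list G, exists h, ~ In h l).
  { intro l. destruct (conj_inf g0 Hg0 l) as [h Hh]. exists h. intro Hi.
    exact (Hh h Hi eq_refl). }
  assert (key : forall A : G -> Prop,
    (forall l : list G, exists h, forall h', In h' l ->
       m (fun x => A (mul (inv h) x) /\ A (mul (inv h') x)) = 0) -> m A = 0).
  { intros A HA.
    assert (Hn : forall n, exists l,
      m (fun x => exists h, In h l /\ A (mul (inv h) x)) = INR n * m A).
    { induction n as [|n [l Hl]].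
      - exists nil. simpl. rewrite Rmult_0_l, <- m0. apply mext.
        intro x; split; [intros [? [[] _]] | intros []].
      - destruct (HA l) as [h Hh]. exists (h :: l).
        rewrite (mext _ (fun x => A (mul (inv h) x) \/ exists h, In h l /\ A (mul (inv h) x))).
        2:{ intro x; split.
            - intros [b [[<-|Hb] Hp]]; [left; auto | right; eauto].
            - intros [Hp | [b [Hb Hp]]]; [exists h; split; [left|]; auto | exists b; split; [right|]; auto]. }
        rewrite mdiff, Hl, Hinv.
        assert (Hi0 : m (fun x => A (mul (inv h) x) /\ (exists h, In h l /\ A (mul (inv h) x))) = 0).
        { apply (null_sub _ (fun x => exists h', In h' l /\
             (A (mul (inv h) x) /\ A (mul (inv h') x)))).
          + intros x [Ha [b [Hb Hb']]]. exists b. auto.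
          + apply (null_list G l (fun h' x => A (mul (inv h) x) /\ A (mul (inv h') x))).
            exact Hh. }
        rewrite Hi0, S_INR. ring. }
    pose proof (Hnn A) as HA0.
    destruct (Rle_lt_or_eq_dec 0 (m A) HA0) as [Hpos | Heq]; [|auto].
    exfalso.
    destruct (archimed (/ m A)) as [Hup _].
    assert (Hz : (0 <= up (/ m A))%Z).
    { apply le_IZR. pose proof (Rinv_0_lt_compat _ Hpos). simpl. lra. }
    destruct (Hn (Z.to_nat (up (/ m A)))) as [l Hl].
    pose proof (mle1 (fun x => exists h, In h l /\ A (mul (inv h) x))) as Hle.
    rewrite Hl, INR_IZR_INZ, Z2Nat.id in Hle by exact Hz.
    assert (/ m A * m A = 1) by (field; lra).
    assert (IZR (up (/ m A)) * m A > / m A * m A) by (apply Rmult_gt_compat_r; lra).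
    lra. }
  assert (CSnull : forall u v, v <> e -> m (fun g => c g u = v) = 0).
  { intros u v Hv. apply key. intro l. destruct (conj_inf v Hv l) as [h Hh].
    exists h. intros h' Hi. rewrite <- m0. apply mext. intro x; split; [|intros []].
    intros [E1 E2]. apply (Hh h' Hi).
    rewrite c_mul in E1, E2. apply c_inv in E1. apply c_inv in E2.
    rewrite inv_inv in E1, E2. rewrite <- E1, <- E2. reflexivity. }
  assert (CSnull' : forall u v, u <> e -> m (fun g => c g u = v) = 0).
  { intros u v Hu. destruct (classic (v = e)) as [->|Hv]; [|apply CSnull; exact Hv].
    rewrite <- m0. apply mext. intro g; split; [|intros []]. intro E.
    apply c_inv in E. rewrite c_e in E. exact (Hu E). }
  assert (Invnull : m (fun k => mul k k = e) = 0).
  { apply key. intro l. destruct (Ginf l) as [h Hh]. exists h. intros h' Hi.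
    set (t := mul (inv h') h).
    assert (Ht : inv t <> e).
    { intro E. apply Hh. assert (E' : t = e) by (rewrite <- (inv_inv t), E; exact inv_e).
      unfold t in E'. apply inv_uniq in E'. rewrite inv_inv in E'. rewrite E'; exact Hi. }
    apply (null_sub _ (fun x => (fun a => c a t = inv t) (mul (inv h) x))).
    - intros x [Ea Eb]. cbv beta. set (a := mul (inv h) x) in *.
      assert (Hb : mul (inv h') x = mul t a) by (unfold t, a; rewrite <- assoc, cl'; reflexivity).
      rewrite Hb in Eb.
      assert (Ha : inv a = a) by (symmetry; apply inv_uniq; exact Ea).
      unfold c. rewrite Ha. apply inv_uniq. rewrite <- !assoc. rewrite <- !assoc in Eb. exact Eb.
    - etransitivity; [apply (Hinv h (fun a => c a t = inv t))|]. apply CSnull. exact Ht. }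
  assert (SQnull : forall z, m (fun k => mul k k = z) = 0).
  { intro z. destruct (classic (z = e)) as [->|Hz]; [exact Invnull|].
    apply (null_sub _ (fun k => c k z = z)); [|apply CSnull; exact Hz].
    intros k E. rewrite <- E. unfold c.
    rewrite assoc, <- (assoc (mul k k) k (inv k)), invr, idr. reflexivity. }
  assert (C1null : forall a b, m (fun g => mul (mul g a) g = b) = 0).
  { intros a b. apply (null_sub _ (fun g => (fun k => mul k k = mul a b) (mul a g))).
    - intros g E. cbv beta. rewrite <- E. rewrite <- !assoc. reflexivity.
    - etransitivity; [apply (transl a (fun k => mul k k = mul a b))|]. apply SQnull. }
  assert (Finnull : forall l, m (fun g => In g l) = 0).
  { intro l. apply (null_sub _ (fun g => exists a, In a l /\ (fun a g => c g g0 = c a g0) a g)).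
    - intros g Hi. exists g. auto.
    - apply null_list. intros a _. apply CSnull'. exact Hg0. }
  intro Hfin. destruct Hfin as [L HL]. destruct HXfin as [lX HX].
  set (Bad := fun g => exists x, In x lX /\ exists y, In y lX /\ (y <> e /\
     (y = mul (mul g x) g \/ y = mul (mul g x) (inv g) \/
      y = mul (mul (inv g) x) g \/ y = mul (mul (inv g) x) (inv g)))).
  assert (Hcov : forall g, In g L \/ Bad g).
  { intro g. destruct (classic (In g L)) as [Hi|Hni]; [left; exact Hi|right].
    assert (Hn : ~ super_switching mul e inv X g) by (intro Hs; apply Hni, HL, Hs).
    unfold super_switching in Hn.
    destruct (not_all_ex_not _ _ Hn) as [y Hy].
    apply imply_to_and in Hy as [HXy Hy].
    apply imply_to_and in Hy as [[x [HXx Hc]] Hne].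
    exists x; split; [apply HX; exact HXx|].
    exists y; split; [apply HX; exact HXy|]. split; assumption. }
  assert (HB : m Bad = 0).
  { apply (null_list G lX (fun x g => exists y, In y lX /\ (y <> e /\
     (y = mul (mul g x) g \/ y = mul (mul g x) (inv g) \/
      y = mul (mul (inv g) x) g \/ y = mul (mul (inv g) x) (inv g))))).
    intros x _.
    apply (null_list G lX (fun y g => (y <> e /\
     (y = mul (mul g x) g \/ y = mul (mul g x) (inv g) \/
      y = mul (mul (inv g) x) g \/ y = mul (mul (inv g) x) (inv g))))).
    intros y _.
    destruct (classic (y = e)) as [Hy|Hy].
    { rewrite <- m0. apply mext. intro g; split; [|intros []]. intros [Hy' _]. exact (Hy' Hy). }
    apply (null_sub _ (fun g => (mul (mul g x) g = y \/ c g x = y) \/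
                                (c g y = x \/ mul (mul g y) g = x))).
    - intros g [_ [E|[E|[E|E]]]].
      + left; left; symmetry; exact E.
      + left; right; symmetry; exact E.
      + right; left. rewrite E. unfold c. rewrite <- !assoc, cl', invr, idr. reflexivity.
      + right; right. rewrite E. rewrite <- !assoc, cl', invl, idr. reflexivity.
    - apply null_union; apply null_union.
      + apply C1null.
      + apply CSnull; exact Hy.
      + apply CSnull'; exact Hy.
      + apply C1null. }
  assert (Hle : m (fun _ => True) <= m (fun g => In g L \/ Bad g)).
  { apply mmono. intros g _. apply Hcov. }
  rewrite null_union in Hle; [lra | apply Finnull | exact HB].
Qed.
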